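(* Let $a,b,\beta\in\mathbb{C}$, $\theta\in(-\pi/2,\pi/2)$, and let $f_0,f_1$ be solutions of $$f'(x)+\Big(1-\frac{\beta}{x}\Big)f(x)=x^{-2}+af(x)^2+bf(x)^3$$ on the ray $\{x=re^{i\theta}:r\ge r_0\}$ (differentiable along the ray, with $f'=e^{-i\theta}\,\tfrac{d}{dr}$), such that $f_0(x)\to0$ and $f_1(x)\to0$ as $x\to\infty$ along the ray. Then there is a constant $C\in\mathbb{C}$ such that $f_1(x)-f_0(x)=e^{-x}x^{\beta}\big(C+o(1)\big)$ as $x\to\infty$ along the ray (principal branch of $x^\beta$). Moreover, if $C=0$ then $f_1=f_0$ for all sufficiently large $x$ on the ray. *)

(* Defs.v *)
From Stdlib Require Import Reals.
From Coquelicot Require Export Coquelicot.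
Export Rdefinitions Rfunctions.
Open Scope R_scope.

Definition cexp (z : C) : C :=
  (exp (Re z) * cos (Im z), exp (Re z) * sin (Im z)).

(* Principal argument, with values in (-PI, PI] (0 for z = 0). *)
Definition Carg (z : C) : R :=
  let x := Re z in let y := Im z in
  if Rlt_dec 0 x then atan (y / x)
  else if Rlt_dec x 0 then
    (if Rle_dec 0 y then atan (y / x) + PI else atan (y / x) - PI)
  else if Rlt_dec 0 y then PI / 2
  else if Rlt_dec y 0 then - (PI / 2)
  else 0.

Definition Clog (z : C) : C := (ln (Cmod z), Carg z).

Definition Cppow (z w : C) : C :=
  if Ceq_dec z 0 then 0%C else cexp (w * Clog z)%C.

Definition ray (theta r : R) : C := (RtoC r * cexp (RtoC theta * (0,1)))%C.

(* f solves f'(x) + (1 - beta/x) f(x) = x^-2 + a f(x)^2 + b f(x)^3 on the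
   ray {r e^{i theta} : r > r0}, where f' = e^{-i theta} d/dr along the ray. *)
Definition ray_solution (a b beta : C) (theta r0 : R) (f : C -> C) : Prop :=
  forall r : R, r0 < r ->
    exists d : C,
      is_derive (fun s : R => f (ray theta s)) r d /\
      (let x := ray theta r in
       (cexp (RtoC 0 - RtoC theta * (0,1)) * d + (1 - beta / x) * f x
        = / (x * x) + a * (f x * f x) + b * (f x * f x * f x))%C).

(* Main.v *)
Require Import Defs.
From Stdlib Require Import Reals.
From Coquelicot Require Import Coquelicot.
From Stdlib Require Import Lra Lia.
Open Scope R_scope.

Lemma norm_fst_le {K : AbsRing} {U V : NormedModule K} (p : U * V) : norm (fst p) <= norm p /\ norm (snd p) <= norm p.
Proof.
destruct p as [u v]. simpl. unfold norm at 3 4. simpl. unfold prod_norm. simpl.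
pose proof (norm_ge_0 u). pose proof (norm_ge_0 v).
assert (Hs: forall x y, 0<=x -> x <= sqrt(x*(x*1) + y*(y*1))).
{ intros x y Hx. rewrite <- (sqrt_pow2 x) at 1 by lra. apply sqrt_le_1_alt. nra. }
split. apply Hs; lra. rewrite Rplus_comm. apply Hs; lra.
Qed.

Definition CD (f : R -> C) (x : R) (l : C) :=
  is_derive (fun t => Re (f t)) x (Re l) /\ is_derive (fun t => Im (f t)) x (Im l).

Lemma CD_of (f : R -> C) x (l : C) : is_derive f x l -> CD f x l.
Proof.
intros [_ H]. split; (split; [apply is_linear_scal_l|]);
intros x0 Hx0 eps; specialize (H x0 Hx0 eps); revert H; apply filter_imp; intros y Hy;
refine (Rle_trans _ _ _ _ Hy); 
pose proof (norm_fst_le (minus (minus (f y) (f x0)) (scal (minus y x0) l))) as [H1 H2].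
exact H1. exact H2.
Qed.

Lemma D_eq (f : R -> R) (x l l' : R) : is_derive f x l -> l = l' -> is_derive f x l'.
Proof. intros H ->; exact H. Qed.
Lemma CD_eq (f : R -> C) (x : R) (l l' : C) : CD f x l -> l = l' -> CD f x l'.
Proof. intros H ->; exact H. Qed.

Lemma D_mult (f g : R -> R) (x df dg : R) : is_derive f x df -> is_derive g x dg ->
  is_derive (fun t => f t * g t) x (df * g x + f x * dg).
Proof. intros; apply (is_derive_mult f g); auto. intros; apply Rmult_comm. Qed.
Lemma D_plus (f g : R -> R) (x df dg : R) : is_derive f x df -> is_derive g x dg ->
  is_derive (fun t => f t + g t) x (df + dg).
Proof. intros; apply (is_derive_plus f g); auto. Qed.
Lemma D_minus (f g : R -> R) (x df dg : R) : is_derive f x df -> is_derive g x dg ->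
  is_derive (fun t => f t - g t) x (df - dg).
Proof. intros; apply (is_derive_minus f g); auto. Qed.
Lemma D_const (c x : R) : is_derive (fun _ => c) x 0.
Proof. apply (is_derive_const c). Qed.
Lemma D_id (x : R) : is_derive (fun t => t) x 1.
Proof. apply (is_derive_id x). Qed.
Lemma D_comp (f g : R -> R) (x df dg : R) : is_derive f x df -> is_derive g (f x) dg ->
  is_derive (fun t => g (f t)) x (dg * df).
Proof. intros H1 H2. eapply D_eq. apply (is_derive_comp g f); eauto. simpl. unfold scal; simpl; unfold mult; simpl. ring. Qed.

Lemma D_opp (f : R -> R) (x df : R) : is_derive f x df -> is_derive (fun t => - f t) x (- df).
Proof. intros H; apply (is_derive_opp f); auto. Qed.
Lemma CD_plus (f g : R -> C) (x : R) (df dg : C) : CD f x df -> CD g x dg -> CD (fun t => f t + g t)%C x (df + dg)%C.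
Proof. intros [H1 H2] [H3 H4]; split; simpl; [apply D_plus|apply D_plus]; auto. Qed.
Lemma CD_minus (f g : R -> C) (x : R) (df dg : C) : CD f x df -> CD g x dg -> CD (fun t => f t - g t)%C x (df - dg)%C.
Proof. intros [H1 H2] [H3 H4]; split; simpl; (apply D_plus; [assumption| apply D_opp; assumption]). Qed.
Lemma CD_mult (f g : R -> C) (x : R) (df dg : C) : CD f x df -> CD g x dg ->
  CD (fun t => f t * g t)%C x (df * g x + f x * dg)%C.
Proof. intros [H1 H2] [H3 H4]; split; simpl.
- eapply D_eq. apply D_plus. apply D_mult; eassumption. apply D_opp; apply D_mult; eassumption.
  unfold Re, Im; simpl; lra.
- eapply D_eq. apply D_plus; apply D_mult; eassumption. unfold Re, Im; simpl; ring.
Qed.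
Lemma CD_const (c : C) x : CD (fun _ => c) x 0%C.
Proof. split; apply D_const. Qed.
Lemma CD_lin (w : C) x : CD (fun t => RtoC t * w)%C x w.
Proof. split; simpl.
- eapply D_eq. apply D_plus. apply D_mult. apply D_id. apply D_const. apply D_opp; apply D_mult; apply D_const.
  unfold Re, Im; simpl; ring.
- eapply D_eq. apply D_plus. apply D_mult. apply D_id. apply D_const. apply D_mult; apply D_const.
  unfold Re, Im; simpl; ring.
Qed.
Lemma CD_lnpair (c : R) x : 0 < x -> CD (fun t => (ln t, c)) x (RtoC (/ x)).
Proof. intros Hx; split; simpl. apply is_derive_ln; auto. apply D_const. Qed.
Lemma CD_cexp (h : R -> C) (x : R) (dh : C) : CD h x dh -> CD (fun t => cexp (h t)) x (cexp (h x) * dh)%C.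
Proof. intros [H1 H2]; unfold cexp; split; simpl.
- eapply D_eq. apply D_mult. apply (D_comp _ exp). eassumption. apply is_derive_exp.
  apply (D_comp _ cos). eassumption. apply is_derive_cos. unfold Re, Im; simpl; ring.
- eapply D_eq. apply D_mult. apply (D_comp _ exp). eassumption. apply is_derive_exp.
  apply (D_comp _ sin). eassumption. apply is_derive_sin. unfold Re, Im; simpl; ring.
Qed.
Lemma D_norm2 (f : R -> C) (x : R) (df : C) : CD f x df ->
  is_derive (fun t => Re (f t) * Re (f t) + Im (f t) * Im (f t)) x (2 * (Re (f x) * Re df + Im (f x) * Im df)).
Proof. intros [H1 H2]; eapply D_eq. apply D_plus; apply D_mult; eassumption. unfold Re, Im; simpl; ring. Qed.

Lemma w_eq (th : R) : cexp (RtoC th * (0,1))%C = (cos th, sin th).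
Proof. unfold cexp; simpl. replace (th*0 - 0*1) with 0 by ring. replace (th*1+0*0) with th by ring.
rewrite exp_0. f_equal; ring. Qed.

Lemma ray_eq th r : ray th r = (r * cos th, r * sin th).
Proof. unfold ray. rewrite w_eq. unfold Cmult, RtoC; simpl. f_equal; ring. Qed.

Lemma w_inv th : (cexp (RtoC 0 - RtoC th * (0,1)) * cexp (RtoC th * (0,1)))%C = 1%C.
Proof. rewrite w_eq. unfold cexp; simpl. replace (0 + - (th*0 - 0*1)) with 0 by ring.
replace (0 + - (th*1+0*0)) with (-th) by ring. rewrite exp_0, cos_neg, sin_neg.
unfold Cmult, RtoC; simpl. pose proof (sin2_cos2 th) as Hs. unfold Rsqr in Hs. f_equal; lra. Qed.

Lemma Cmod_w th : Cmod (cos th, sin th) = 1.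
Proof. unfold Cmod; simpl. pose proof (sin2_cos2 th) as Hs. unfold Rsqr in Hs.
 replace (cos th * (cos th * 1) + sin th * (sin th * 1)) with 1 by lra. apply sqrt_1. Qed.

Lemma Cmod_ray th r : 0 <= r -> Cmod (ray th r) = r.
Proof. intros Hr. unfold ray. rewrite w_eq, Cmod_mult, Cmod_w, Cmod_R, Rabs_pos_eq; lra. Qed.

Lemma ray_neq0 th r : 0 < r -> ray th r <> 0%C.
Proof. intros Hr H. assert (Cmod (ray th r) = 0) by (rewrite H; apply Cmod_0). rewrite Cmod_ray in H0; lra. Qed.

Lemma Carg_ray th r : - (PI / 2) < th < PI / 2 -> 0 < r -> Carg (ray th r) = th.
Proof. intros Hth Hr. pose proof (cos_gt_0 th (proj1 Hth) (proj2 Hth)).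
unfold Carg. rewrite ray_eq; simpl. destruct (Rlt_dec 0 (r * cos th)).
- replace (r * sin th / (r * cos th)) with (tan th). apply atan_tan; auto.
  unfold tan. field. split; lra.
- exfalso. apply n. nra. Qed.

Lemma cexp_add z1 z2 : (cexp z1 * cexp z2)%C = cexp (z1 + z2)%C.
Proof. unfold cexp; simpl. unfold Re, Im; simpl. rewrite exp_plus, cos_plus, sin_plus. unfold Cmult; simpl. f_equal; ring. Qed.

Lemma cexp_0 : cexp 0%C = 1%C.
Proof. unfold cexp; simpl. rewrite exp_0, cos_0, sin_0. unfold RtoC. f_equal; ring. Qed.

Lemma cexp_neg z : (cexp z * cexp (- z))%C = 1%C.
Proof. rewrite cexp_add. replace (z + - z)%C with (RtoC 0) by ring. apply cexp_0. Qed.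

Lemma Cppow_ray th r beta : - (PI / 2) < th < PI / 2 -> 0 < r ->
  Cppow (ray th r) beta = cexp (beta * (ln r, th))%C.
Proof. intros Hth Hr. unfold Cppow. destruct (Ceq_dec (ray th r) 0).
- exfalso; eapply ray_neq0; eauto.
- unfold Clog. rewrite Cmod_ray, Carg_ray by (auto; lra). reflexivity. Qed.

Lemma Cmod_le_sum z : Cmod z <= Rabs (Re z) + Rabs (Im z).
Proof. destruct z as [x y]. unfold Cmod, Re, Im; simpl.
 pose proof (Rabs_pos x); pose proof (Rabs_pos y).
 rewrite <- (sqrt_pow2 (Rabs x + Rabs y)) by lra.
 apply sqrt_le_1_alt. replace (x * (x*1)) with (Rabs x * Rabs x).
 replace (y * (y*1)) with (Rabs y * Rabs y). nra.
 rewrite <- Rabs_mult, Rabs_pos_eq; nra. rewrite <- Rabs_mult, Rabs_pos_eq; nra. Qed.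

Lemma small_ev (u : R -> C) : filterlim u (Rbar_locally p_infty) (locally (RtoC 0)) ->
  forall e, 0 < e -> exists R, forall r, R < r -> Cmod (u r) <= e.
Proof. intros H e He. apply filterlim_locally with (eps := mkposreal (e/2) ltac:(lra)) in H.
 destruct H as [M HM]. exists M. intros r Hr. specialize (HM r Hr). destruct HM as [H1 H2].
 change (Rabs (fst (u r) - 0) < e/2) in H1. change (Rabs (snd (u r) - 0) < e/2) in H2. rewrite Rminus_0_r in H1, H2.
 pose proof (Cmod_le_sum (u r)). unfold Re, Im in H. lra. Qed.

Lemma nonincr (F dF : R -> R) a : (forall x, a < x -> is_derive F x (dF x)) ->
  (forall x, a < x -> dF x <= 0) -> forall x y, a < x -> x <= y -> F y <= F x.
Proof. intros HD Hneg x y Hx Hxy. destruct (Req_dec x y) as [<-|Hne]; [lra|].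
 destruct (MVT_gen F x y dF) as [c [Hc Heq]].
 - intros z Hz. apply HD. rewrite Rmin_left in Hz by lra. lra.
 - intros z Hz. rewrite Rmin_left in Hz by lra. apply continuity_pt_filterlim.
   apply (ex_derive_continuous F). exists (dF z). apply HD. lra.
 - rewrite Rmin_left in Hc by lra. assert (dF c <= 0) by (apply Hneg; lra). nra. Qed.

Lemma squeeze_lim (m M : R -> R) x0 :
  (forall s t, x0 < s -> s <= t -> m s <= m t) -> (forall s t, x0 < s -> s <= t -> M t <= M s) ->
  (forall s, x0 < s -> m s <= M s) -> exists l, forall s, x0 < s -> m s <= l <= M s.
Proof. intros Hm HM Hle.
 set (E := fun y => exists s, x0 < s /\ y = m s).
 assert (Hub : forall s, x0 < s -> is_upper_bound E (M s)).
 { intros s Hs y [t [Ht ->]]. destruct (Rle_dec t s).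
   - apply Rle_trans with (m s). apply Hm; auto. apply Hle; auto.
   - apply Rle_trans with (M t). apply Hle; auto. apply HM; lra. }
 destruct (completeness E) as [l [Hl1 Hl2]].
 - exists (M (x0+1)). apply Hub; lra.
 - exists (m (x0+1)). exists (x0+1). split; [lra|auto].
 - exists l. intros s Hs. split. apply Hl1. exists s; auto. apply Hl2. apply Hub; auto. Qed.


Definition wv (th : R) : C := cexp (RtoC th * (0,1))%C.

Lemma wv_neq0 th : wv th <> 0%C.
Proof. intros H. pose proof (Cmod_w th). rewrite <- w_eq in H0. fold (wv th) in H0. rewrite H, Cmod_0 in H0. lra. Qed.

Lemma sol_deriv a b beta th r0 f r : ray_solution a b beta th r0 f -> r0 < r ->
  CD (fun s => f (ray th s)) r
   (wv th * (- (1 - beta / ray th r) * f (ray th r) + / (ray th r * ray th r)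
     + a * (f (ray th r) * f (ray th r)) + b * (f (ray th r) * f (ray th r) * f (ray th r))))%C.
Proof. intros H Hr. destruct (H r Hr) as [d [Hd Heq]]. cbv zeta in Heq.
 apply CD_eq with d. apply CD_of; auto.
 pose proof (w_inv th) as E. fold (wv th) in E.
 set (e := cexp (RtoC 0 - RtoC th * (0, 1))) in *.
 transitivity (wv th * (e * d))%C.
 { rewrite Cmult_assoc, (Cmult_comm (wv th) e), E. ring. }
 f_equal. replace (e*d)%C with ((e*d + (1 - beta/ray th r) * f (ray th r)) - (1 - beta/ray th r)*f (ray th r))%C by ring.
 rewrite Heq. ring. Qed.

Lemma re_conj_mult (u z : C) : Re u * Re z + Im u * Im z = Re (Cconj u * z).
Proof. destruct u, z. unfold Cconj, Cmult, Re, Im; simpl. ring. Qed.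

Lemma conj_self (u : C) : (Cconj u * u)%C = RtoC (Re u * Re u + Im u * Im u).
Proof. destruct u. unfold Cconj, Cmult, Re, Im, RtoC; simpl. f_equal; ring. Qed.

Lemma re_RtoC_mult (y : C) (v : R) : Re (y * RtoC v) = Re y * v.
Proof. destruct y. unfold Cmult, Re, RtoC; simpl. ring. Qed.

Lemma Cmod_sq (u : C) : Cmod u * Cmod u = Re u * Re u + Im u * Im u.
Proof. pose proof (Cmod2_alt u). simpl in H. lra. Qed.

Lemma re_le (z : C) : Re z <= Cmod z.
Proof. pose proof (re_le_Cmod z). pose proof (Rle_abs (Re z)). lra. Qed.

Lemma re_minus (x y : C) : Re (x - y) = Re x - Re y.
Proof. destruct x, y; unfold Re; simpl; ring. Qed.

Lemma key_ineq (a b beta U : C) (th r e : R) :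
  0 < cos th -> 0 < r -> Cmod U <= e -> e <= 1 ->
  Cmod beta / r + (Cmod a + Cmod b) * e <= cos th / 2 ->
  2 * Re (Cconj U * (wv th * (- (1 - beta / ray th r) * U + / (ray th r * ray th r)
     + a * (U * U) + b * (U * U * U))))%C
  <= - (cos th / 2) * (Cmod U * Cmod U) + 2 / (cos th * (r*r*r*r)).
Proof. intros Hk Hr HU He Hsm.
 pose proof (wv_neq0 th) as Hw.
 assert (Hr0 : RtoC r <> 0%C). { intros H. apply (f_equal fst) in H. simpl in H. lra. }
 set (w := wv th) in *. set (Y := (w * (1 - beta / ray th r - a * U - b * (U * U)))%C).
 set (T := (Cconj U * w * / (ray th r * ray th r))%C).
 assert (E1 : (Cconj U * (w * (- (1 - beta / ray th r) * U + / (ray th r * ray th r)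
     + a * (U * U) + b * (U * U * U))))%C = (- Y * (Cconj U * U) + T)%C).
 { unfold Y, T. ring. }
 rewrite E1, conj_self. rewrite <- Cmod_sq.
 assert (E2 : Re (- Y * RtoC (Cmod U * Cmod U) + T) = - Re Y * (Cmod U * Cmod U) + Re T).
 { simpl. unfold Re, Im. simpl. ring. }
 rewrite E2.
 set (Z := (beta / RtoC r + w * a * U + w * b * (U * U))%C).
 assert (E3 : Y = (w - Z)%C). { unfold Y, Z, ray. replace (cexp (RtoC th * (0,1))) with w by reflexivity. field. split; auto. }
 assert (HwRe : Re w = cos th). { unfold w, wv. rewrite w_eq. reflexivity. }
 assert (HwC : Cmod w = 1). { unfold w, wv. rewrite w_eq. apply Cmod_w. }
 assert (HZ : Cmod Z <= Cmod beta / r + (Cmod a + Cmod b) * e).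
 { unfold Z. eapply Rle_trans. apply Cmod_triangle. eapply Rle_trans. apply Rplus_le_compat_r. apply Cmod_triangle.
   rewrite Cmod_div by auto. rewrite !Cmod_mult, Cmod_R, Rabs_pos_eq, HwC by lra.
   pose proof (Cmod_ge_0 U). pose proof (Cmod_ge_0 a). pose proof (Cmod_ge_0 b).
   assert (Cmod U * Cmod U <= Cmod U) by nra. nra. }
 assert (HReY : Re Y >= cos th / 2).
 { rewrite E3, re_minus. pose proof (re_le Z). lra. }
 assert (HT : Re T <= Cmod U / (r * r)).
 { eapply Rle_trans. apply re_le. unfold T. rewrite Cmod_mult, Cmod_mult, Cmod_conj, HwC.
   rewrite Cmod_inv. rewrite Cmod_mult, Cmod_ray by lra. unfold Rdiv. lra.
   apply Cmult_neq_0; apply ray_neq0; auto. }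
 pose proof (Cmod_ge_0 U).
 assert (HAM : 2 * (Cmod U / (r*r)) <= (cos th / 2) * (Cmod U * Cmod U) + 2 / (cos th * (r*r*r*r))).
 { set (m := Cmod U). set (q := / (r*r)).
   replace (Cmod U / (r*r)) with (m * q) by (unfold m, q; field; lra).
   replace (2 / (cos th * (r*r*r*r))) with (2 / cos th * (q * q)) by (unfold q; field; split; lra).
   assert (0 <= cos th / 2 * (m * m) - 2 * (m * q) + 2 / cos th * (q * q)).
   { replace (cos th / 2 * (m * m) - 2 * (m * q) + 2 / cos th * (q * q)) with
       (cos th / 2 * ((m - 2 * q / cos th) * (m - 2 * q / cos th))) by (field; lra).
     apply Rmult_le_pos. lra. apply Rle_0_sqr. }
   replace (m / (r*r)) with (m * q) by (unfold q; field; lra). lra. }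
 assert (0 <= Cmod U * Cmod U) by nra.
 assert (Re Y * (Cmod U * Cmod U) >= cos th/2 * (Cmod U * Cmod U)) by (apply Rmult_ge_compat_r; lra).
 lra. Qed.


Lemma D_inv4 (M x : R) : x <> 0 -> is_derive (fun t => M / (t*t*t*t)) x (- (4 * M / (x*x*x*x*x))).
Proof. intros Hx. auto_derive. repeat split; auto. intro H. apply Hx. 
 assert ((x*x)*(x*x) = 0) by lra. apply Rmult_integral in H0. destruct H0; apply Rmult_integral in H0; destruct H0; auto.
 field. auto. Qed.

Lemma D_expc (c x : R) : is_derive (fun t => exp (c * t)) x (exp (c * x) * c).
Proof. eapply D_eq. apply (D_comp (fun t => c * t) exp). eapply D_mult. apply D_const. apply D_id.
 apply is_derive_exp. simpl. ring. Qed.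

Lemma pos4 x : 0 < x -> 0 < x*x*x*x.
Proof. intros. assert (0 < x*x) by nra. assert (0 < x*x*x) by nra. nra. Qed.

Lemma decay a b beta th r0 f : - (PI / 2) < th < PI / 2 -> 0 < r0 ->
  ray_solution a b beta th r0 f ->
  filterlim (fun r : R => f (ray th r)) (Rbar_locally p_infty) (locally (RtoC 0)) ->
  exists A R1, 0 <= A /\ 0 < R1 /\ forall r, R1 < r -> Cmod (f (ray th r)) <= A / (r * r).
Proof.
 intros Hth Hr0 Hsol Hlim.
 set (u := fun r => f (ray th r)). fold u in Hlim.
 set (k := cos th). assert (Hk : 0 < k) by (apply cos_gt_0; lra).
 pose proof (Cmod_ge_0 a) as Ha0. pose proof (Cmod_ge_0 b) as Hb0. pose proof (Cmod_ge_0 beta) as Hbe0.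
 set (e := Rmin 1 (k / (4 * (Cmod a + Cmod b + 1)))).
 assert (He0 : 0 < e). { unfold e. apply Rmin_glb_lt. lra. apply Rdiv_lt_0_compat; lra. }
 assert (He1 : e <= 1) by apply Rmin_l.
 assert (Hae : (Cmod a + Cmod b) * e <= k / 4).
 { apply Rle_trans with ((Cmod a + Cmod b + 1) * (k / (4 * (Cmod a + Cmod b + 1)))).
   apply Rmult_le_compat; try lra. apply Rmin_r. right. field. lra. }
 destruct (small_ev u Hlim e He0) as [Re_ HRe].
 set (R0 := Rmax (Rmax r0 Re_) (Rmax (4 * (Cmod beta + 1) / k) (Rmax (16 / k) 1))).
 assert (HR0 : forall r, R0 < r -> r0 < r /\ Re_ < r /\ 4 * (Cmod beta + 1) / k < r /\ 16 / k < r /\ 1 < r).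
 { intros r Hr. unfold R0 in Hr. 
   apply Rmax_Rlt in Hr; destruct Hr as [Ha Hb].
   apply Rmax_Rlt in Ha; destruct Ha as [Ha1 Ha2].
   apply Rmax_Rlt in Hb; destruct Hb as [Hb1 Hb2].
   apply Rmax_Rlt in Hb2; destruct Hb2 as [Hb3 Hb4]. tauto. }
 set (df := fun r => (wv th * (- (1 - beta / ray th r) * u r + / (ray th r * ray th r)
     + a * (u r * u r) + b * (u r * u r * u r)))%C).
 set (v := fun t => Re (u t) * Re (u t) + Im (u t) * Im (u t)).
 set (x0 := R0 + 1).
 set (M := Rmax (8 / (k * k)) (v x0 * (x0 * x0 * x0 * x0))).
 set (z := fun t => (v t - M / (t*t*t*t)) * exp (k / 2 * t)).
 set (dz := fun t => (2 * (Re (u t) * Re (df t) + Im (u t) * Im (df t)) - (- (4 * M / (t*t*t*t*t))))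
    * exp (k / 2 * t) + (v t - M / (t*t*t*t)) * (exp (k / 2 * t) * (k / 2))).
 assert (HM1 : 8 / (k * k) <= M) by apply Rmax_l.
 assert (HM2 : v x0 * (x0 * x0 * x0 * x0) <= M) by apply Rmax_r.
 assert (Hz : forall x y, R0 < x -> x <= y -> z y <= z x).
 { apply (nonincr z dz R0).
   - intros x Hx. destruct (HR0 x Hx) as [H1 [H2 [H3 [H4 H5]]]].
     unfold z, dz. eapply D_eq. apply (D_mult (fun t => v t - M / (t*t*t*t)) (fun t => exp (k/2*t))).
     apply (D_minus v (fun t => M/(t*t*t*t))). unfold v. apply D_norm2. exact (sol_deriv a b beta th r0 f x Hsol H1).
     apply D_inv4. lra. apply D_expc. reflexivity.
   - intros x Hx. destruct (HR0 x Hx) as [H1 [H2 [H3 [H4 H5]]]].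
     assert (Hx0 : 0 < x) by lra.
     assert (Hbeta : Cmod beta / x <= k / 4).
     { apply Rmult_le_reg_r with x. lra. unfold Rdiv. rewrite Rmult_assoc, Rinv_l by lra.
       apply Rmult_le_reg_r with (4 / k). apply Rdiv_lt_0_compat; lra.
       replace (k * / 4 * x * (4 / k)) with x by (field; lra). 
       apply Rle_trans with (4 * (Cmod beta + 1) / k). assert (Hik: 0 < /k) by (apply Rinv_0_lt_compat; lra). unfold Rdiv in *. replace (4 * (Cmod beta+1) * /k) with (Cmod beta * 1 * (4 * /k) + 4 * /k) by ring. lra. lra. }
     pose proof (key_ineq a b beta (u x) th x e Hk Hx0 (HRe x H2) He1 ltac:(fold k; lra)) as HK.
     fold k in HK. rewrite <- re_conj_mult, Cmod_sq in HK. fold (df x) in HK.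
     unfold dz. fold (v x). change (Re (u x) * Re (u x) + Im (u x) * Im (u x)) with (v x) in HK.
     set (E := exp (k / 2 * x)). assert (HE : 0 < E) by apply exp_pos.
     set (D := Re (u x) * Re (df x) + Im (u x) * Im (df x)) in *.
     set (p := / (x*x*x*x)). assert (Hp : 0 < p). { unfold p. apply Rinv_0_lt_compat. 
       assert (0 < x*x) by nra. nra. }
     replace (M / (x*x*x*x)) with (M * p) by (unfold p; field; lra).
     replace (4 * M / (x*x*x*x*x)) with (4 * M * p * / x) by (unfold p; field; lra).
     replace (2 / (k * (x*x*x*x))) with (2 / k * p) in HK by (unfold p; field; lra).
     assert (H6 : 4 * / x <= k / 4).
     { apply Rmult_le_reg_r with x. lra. rewrite Rmult_assoc, Rinv_l by lra.
       apply Rmult_le_reg_r with (4 / k). apply Rdiv_lt_0_compat; lra.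
       replace (k / 4 * x * (4 / k)) with x by (field; lra). replace (4 * 1 * (4/k)) with (16/k) by (field; lra). lra. }
     assert (H7 : 2 / k <= k / 4 * M).
     { apply Rle_trans with (k / 4 * (8 / (k*k))). right. field. lra. apply Rmult_le_compat_l; lra. }
     assert (HMp : 0 <= M) by (apply Rle_trans with (8/(k*k)); [apply Rlt_le, Rdiv_lt_0_compat; nra | auto]).
     assert (H8 : 4 * M * p * / x <= k / 4 * M * p).
     { replace (4 * M * p * / x) with ((4 * / x) * (M * p)) by ring.
       replace (k / 4 * M * p) with (k / 4 * (M * p)) by ring. apply Rmult_le_compat_r. nra. auto. }
     assert (H9 : 2 / k * p <= k / 4 * M * p) by (apply Rmult_le_compat_r; lra).
     assert (Hbr : 2 * D - - (4 * M * p * / x) + (v x - M * p) * (k / 2) <= 0) by lra.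
     replace ((2 * D - - (4 * M * p * / x)) * E + (v x - M * p) * (E * (k / 2)))
       with (E * (2 * D - - (4 * M * p * / x) + (v x - M * p) * (k / 2))) by ring.
     nra. }
 assert (Hx0 : 0 < x0). { destruct (HR0 (R0 + 1) ltac:(lra)). unfold x0; lra. }
 assert (Hzx0 : z x0 <= 0).
 { unfold z. assert (v x0 <= M / (x0*x0*x0*x0)).
   { apply Rmult_le_reg_r with (x0*x0*x0*x0). apply pos4; lra. pose proof (pos4 x0 Hx0). 
     replace (M / (x0 * x0 * x0 * x0) * (x0 * x0 * x0 * x0)) with M by (field; lra). lra. }
   pose proof (exp_pos (k / 2 * x0)). nra. }
 exists (sqrt M), x0. split. apply sqrt_pos. split. auto.
 intros y Hy. assert (Hzy : z y <= 0). { apply Rle_trans with (z x0). apply Hz; [unfold x0; lra | lra]. auto. }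
 assert (Hvy : v y <= M / (y*y*y*y)).
 { unfold z in Hzy. pose proof (exp_pos (k / 2 * y)). nra. }
 assert (HMp : 0 <= M) by (apply Rle_trans with (8/(k*k)); [apply Rlt_le, Rdiv_lt_0_compat; nra | auto]).
 fold (u y). assert (Hy0 : 0 < y) by lra.
 rewrite <- (sqrt_pow2 (sqrt M / (y*y))). 
 2: { apply Rle_trans with (0 / (y*y)). right; field; lra. apply Rmult_le_compat_r. 
      apply Rlt_le, Rinv_0_lt_compat; nra. apply sqrt_pos. }
 unfold Cmod. apply sqrt_le_1_alt.
 replace ((sqrt M / (y * y)) ^ 2) with (sqrt M * sqrt M / (y*y*y*y)) by (field; lra).
 rewrite sqrt_sqrt by auto. unfold v in Hvy. simpl. unfold Re, Im in Hvy. lra.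
Qed.


Lemma Rabs_le_inv' x y : Rabs x <= y -> - y <= x <= y.
Proof. unfold Rabs; destruct (Rcase_abs x); lra. Qed.
Lemma Rabs_le' x y : - y <= x <= y -> Rabs x <= y.
Proof. unfold Rabs; destruct (Rcase_abs x); lra. Qed.

Lemma sq_le x y : Rabs x <= y -> x * x <= y * y.
Proof. intros H. apply Rabs_le_inv' in H. nra. Qed.

Lemma D_inv (c x : R) : x <> 0 -> is_derive (fun t => c / t) x (- (c / (x*x))).
Proof. intros Hx. auto_derive. auto. field. auto. Qed.

Lemma D_expinv (c x : R) : x <> 0 -> is_derive (fun t => exp (c / t)) x (exp (c / x) * (- (c / (x*x)))).
Proof. intros Hx. apply (D_comp (fun t => c / t) exp). apply D_inv; auto. apply is_derive_exp. Qed.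

Lemma exp_ge1 y : 0 <= y -> 1 <= exp y.
Proof. intros. pose proof (exp_ineq1_le y). lra. Qed.

Lemma exp_le1 y : 0 <= y -> exp (- y) <= 1.
Proof. intros. rewrite exp_Ropp. pose proof (exp_ge1 y H). 
 rewrite <- Rinv_1. apply Rinv_le_contravar; lra. Qed.

Lemma re_conj_self_mult (q p : C) : Re (Cconj q * (q * p)) = (Re q * Re q + Im q * Im q) * Re p.
Proof. destruct q, p. unfold Cconj, Cmult, Re, Im; simpl. ring. Qed.

Lemma lin_ode (q psi : R -> C) (x0 K : R) : 0 < x0 -> 0 <= K ->
  (forall t, x0 < t -> CD q t (q t * psi t)%C) ->
  (forall t, x0 < t -> Cmod (psi t) <= K / (t*t)) ->
  exists (C0 : C) (B x1 : R), 0 < B /\ x0 < x1 /\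
    (forall t, x1 < t -> Rabs (Re (q t) - Re C0) <= B / t /\ Rabs (Im (q t) - Im C0) <= B / t) /\
    (C0 = RtoC 0 -> forall t, x1 < t -> q t = RtoC 0).
Proof.
 intros Hx0 HK HD Hpsi.
 set (vq := fun t => Re (q t) * Re (q t) + Im (q t) * Im (q t)).
 assert (Hvq0 : forall t, 0 <= vq t). { intros t. unfold vq. nra. }
 assert (Hdv : forall t, x0 < t -> is_derive vq t (2 * vq t * Re (psi t))).
 { intros t Ht. eapply D_eq. apply D_norm2. apply HD; auto.
   rewrite re_conj_mult, re_conj_self_mult. unfold vq. ring. }
 assert (Hrepsi : forall t, x0 < t -> Rabs (Re (psi t)) <= K / (t*t)).
 { intros t Ht. eapply Rle_trans. apply re_le_Cmod. auto. }
 set (F1 := fun t => vq t * exp (2 * K / t)).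
 assert (HF1 : forall s t, x0 < s -> s <= t -> F1 t <= F1 s).
 { apply (nonincr F1 (fun t => 2 * vq t * Re (psi t) * exp (2 * K / t) + vq t * (exp (2 * K / t) * - (2 * K / (t * t)))) x0).
   - intros t Ht. apply (D_mult vq (fun t => exp (2 * K / t))). auto. apply D_expinv. lra.
   - intros t Ht. pose proof (Hrepsi t Ht). pose proof (Hvq0 t). pose proof (exp_pos (2 * K / t)).
     apply Rabs_le_inv' in H. 
     assert (vq t * Re (psi t) <= vq t * (K / (t*t))) by (apply Rmult_le_compat_l; lra).
     replace (2 * K / (t*t)) with (2 * (K / (t*t))) by (field; lra).
     set (E := exp (2 * K / t)) in *. 
     replace (2 * vq t * Re (psi t) * E + vq t * (E * - (2 * (K / (t * t)))))
       with (2 * E * (vq t * Re (psi t) - vq t * (K / (t*t)))) by ring.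
     assert (0 <= 2 * E) by lra. nra. }
 set (F2 := fun t => - (vq t * exp (- (2 * K) / t))).
 assert (HF2 : forall s t, x0 < s -> s <= t -> F2 t <= F2 s).
 { apply (nonincr F2 (fun t => - (2 * vq t * Re (psi t) * exp (- (2 * K) / t) + vq t * (exp (- (2 * K) / t) * - (- (2 * K) / (t * t))))) x0).
   - intros t Ht. apply (D_opp (fun t => vq t * exp (- (2 * K) / t))).
     apply (D_mult vq (fun t => exp (- (2 * K) / t))). auto. apply D_expinv. lra.
   - intros t Ht. pose proof (Hrepsi t Ht). pose proof (Hvq0 t). pose proof (exp_pos (- (2 * K) / t)).
     apply Rabs_le_inv' in H. 
     assert (- (vq t * (K / (t*t))) <= vq t * Re (psi t)).
     { replace (- (vq t * (K / (t*t)))) with (vq t * - (K / (t*t))) by ring. apply Rmult_le_compat_l; lra. }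
     replace (- (2 * K) / (t*t)) with (- (2 * (K / (t*t)))) by (field; lra).
     set (E := exp (- (2 * K) / t)) in *. 
     replace (- (2 * vq t * Re (psi t) * E + vq t * (E * - - (2 * (K / (t * t))))))
       with (- (2 * E * (vq t * Re (psi t) + vq t * (K / (t*t))))) by ring.
     assert (0 <= 2 * E) by lra. nra. }
 set (x1 := x0 + 1).
 set (Q := sqrt (F1 x1)).
 assert (HF1pos : 0 <= F1 x1). { unfold F1. pose proof (Hvq0 x1). pose proof (exp_pos (2*K/x1)). nra. }
 assert (HQ : forall t, x1 <= t -> Cmod (q t) <= Q).
 { intros t Ht. unfold Q. unfold Cmod. apply sqrt_le_1_alt.
   apply Rle_trans with (F1 t). unfold F1. 
   assert (1 <= exp (2 * K / t)). { apply exp_ge1. apply Rmult_le_pos. lra. apply Rlt_le, Rinv_0_lt_compat. unfold x1 in Ht. lra. }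
   pose proof (Hvq0 t). unfold vq in *. simpl. unfold Re, Im in *. nra.
   apply HF1. unfold x1; lra. auto. }
 set (B := Q * K + 1).
 assert (HQ0 : 0 <= Q) by apply sqrt_pos.
 assert (HB : 0 < B). { unfold B. nra. }
 assert (Hqpsi : forall t, x1 < t -> Cmod (q t * psi t) <= (B - 1) / (t*t)).
 { intros t Ht. rewrite Cmod_mult. unfold B. replace (Q * K + 1 - 1) with (Q * K) by ring.
   assert (0 < t) by (unfold x1 in Ht; lra).
   replace (Q * K / (t*t)) with (Q * (K / (t*t))) by (field; lra).
   apply Rmult_le_compat. apply Cmod_ge_0. apply Cmod_ge_0. apply HQ; lra. apply Hpsi. unfold x1 in Ht; lra. }
 assert (Hcomp : forall (h : R -> R) (dh : R -> R), (forall t, x1 < t -> is_derive h t (dh t)) ->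
     (forall t, x1 < t -> Rabs (dh t) <= (B - 1) / (t*t)) ->
     exists l, forall t, x1 < t -> Rabs (h t - l) <= B / t).
 { intros h dh Hh Hdh.
   destruct (squeeze_lim (fun t => h t - B / t) (fun t => h t + B / t) x1) as [l Hl].
   - intros s t Hs Hst. 
     assert (H := nonincr (fun t => - (h t - B / t)) (fun t => - (dh t - - (B / (t*t)))) x1).
     assert (- (h t - B / t) <= - (h s - B / s)); [|lra]. apply H; auto.
     + intros x Hx. apply D_opp. apply D_minus. auto. apply D_inv. unfold x1 in Hx; lra.
     + intros x Hx. pose proof (Hdh x Hx). apply Rabs_le_inv' in H0.
       assert ((B - 1) / (x*x) <= B / (x*x)). { unfold Rdiv. apply Rmult_le_compat_r. 
         apply Rlt_le, Rinv_0_lt_compat. assert (0 < x) by (unfold x1 in Hx; lra). nra. lra. }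
       lra.
   - intros s t Hs Hst. 
     apply (nonincr (fun t => h t + B / t) (fun t => dh t + - (B / (t*t))) x1); auto.
     + intros x Hx. apply D_plus. auto. apply D_inv. unfold x1 in Hx; lra.
     + intros x Hx. pose proof (Hdh x Hx). apply Rabs_le_inv' in H.
       assert ((B - 1) / (x*x) <= B / (x*x)). { unfold Rdiv. apply Rmult_le_compat_r. 
         apply Rlt_le, Rinv_0_lt_compat. assert (0 < x) by (unfold x1 in Hx; lra). nra. lra. }
       lra.
   - intros s Hs. assert (0 < B / s). { apply Rdiv_lt_0_compat; auto. unfold x1 in Hs; lra. } lra.
   - exists l. intros t Ht. specialize (Hl t Ht). apply Rabs_le'. lra. }
 destruct (Hcomp (fun t => Re (q t)) (fun t => Re (q t * psi t)%C)) as [l1 Hl1].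
 { intros t Ht. apply HD. unfold x1 in Ht; lra. }
 { intros t Ht. eapply Rle_trans. apply re_le_Cmod. auto. }
 destruct (Hcomp (fun t => Im (q t)) (fun t => Im (q t * psi t)%C)) as [l2 Hl2].
 { intros t Ht. apply HD. unfold x1 in Ht; lra. }
 { intros t Ht. eapply Rle_trans. 2: apply (Hqpsi t Ht). 
   destruct (q t * psi t)%C as [c1 c2]. unfold Cmod, Im; simpl. rewrite <- (sqrt_pow2 (Rabs c2)).
   apply sqrt_le_1_alt. assert (Rabs c2 * Rabs c2 = c2 * c2) by (rewrite <- Rabs_mult; apply Rabs_pos_eq; nra). simpl. nra. apply Rabs_pos. }
 exists (l1, l2), B, x1. split; auto. split. unfold x1; lra. split.
 { intros t Ht. split; [apply Hl1 | apply Hl2]; auto. }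
 intros HC0 s Hs.
 assert (El1 : l1 = 0) by (apply (f_equal fst) in HC0; exact HC0).
 assert (El2 : l2 = 0) by (apply (f_equal snd) in HC0; exact HC0).
 rewrite El1 in Hl1. rewrite El2 in Hl2.
 assert (Hs0 : 0 < s) by (unfold x1 in Hs; lra).
 set (X := vq s * exp (- (2 * K) / s)).
 assert (HX0 : 0 <= X). { unfold X. pose proof (Hvq0 s). pose proof (exp_pos (- (2 * K) / s)). nra. }
 assert (HXle : forall t, s <= t -> X <= 2 * (B * B) / (t * t)).
 { intros t Hst. assert (X <= vq t * exp (- (2 * K) / t)).
   { pose proof (HF2 s t ltac:(unfold x1 in Hs; lra) Hst). unfold F2 in H. unfold X. lra. }
   assert (exp (- (2 * K) / t) <= 1).
   { replace (- (2 * K) / t) with (- (2 * K / t)) by (field; lra). apply exp_le1.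
     apply Rmult_le_pos. lra. apply Rlt_le, Rinv_0_lt_compat. lra. }
   pose proof (Hvq0 t).
   assert (vq t <= 2 * (B * B) / (t * t)).
   { pose proof (Hl1 t ltac:(lra)) as HA. pose proof (Hl2 t ltac:(lra)) as HB2. simpl in HA, HB2.
     rewrite Rminus_0_r in HA, HB2. unfold vq.
     assert (Re (q t) * Re (q t) <= (B / t) * (B / t)) by (apply sq_le; auto).
     assert (Im (q t) * Im (q t) <= (B / t) * (B / t)) by (apply sq_le; auto).
     replace (2 * (B * B) / (t * t)) with (B / t * (B / t) + B / t * (B / t)) by (field; lra). lra. }
   pose proof (exp_pos (- (2 * K) / t)). nra. }
 assert (HX : X = 0).
 { destruct (Rle_lt_or_eq_dec 0 X HX0) as [HXp|]; auto. exfalso.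
   set (t := s + 2 * (B * B) / X + 1).
   assert (Ht1 : s < t). { unfold t. assert (0 <= 2 * (B*B) / X) by (apply Rlt_le, Rdiv_lt_0_compat; nra). lra. }
   assert (Ht2 : 1 < t) by (unfold x1 in Hs; lra).
   pose proof (HXle t ltac:(lra)).
   assert (2 * (B * B) / (t * t) <= 2 * (B * B) / t).
   { unfold Rdiv. apply Rmult_le_compat_l. nra. apply Rinv_le_contravar; nra. }
   assert (2 * (B * B) / t < X).
   { apply Rmult_lt_reg_r with t. lra. replace (2 * (B * B) / t * t) with (2 * (B * B)) by (field; lra).
     assert (t > 2 * (B * B) / X) by (unfold t; lra).
     apply Rmult_gt_compat_l with (r := X) in H1; auto.
     replace (X * (2 * (B * B) / X)) with (2 * (B * B)) in H1 by (field; lra). lra. }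
   lra. }
 assert (vq s = 0). { unfold X in HX. pose proof (exp_pos (- (2 * K) / s)). 
   apply Rmult_integral in HX. destruct HX; auto. lra. }
 unfold vq in H. destruct (q s) as [c1 c2] eqn:Eq. unfold Re, Im in H; simpl in H.
 assert (c1 = 0) by nra. assert (c2 = 0) by nra. subst. reflexivity.
Qed.


Lemma RtoC_inv (t : R) : t <> 0 -> RtoC (/ t) = (/ RtoC t)%C.
Proof. intros Ht. unfold Cinv, RtoC; simpl. f_equal; field; auto. Qed.

Lemma im_minus (x y : C) : Im (x - y) = Im x - Im y.
Proof. destruct x, y; unfold Im; simpl; ring. Qed.

Lemma P_Ex th r beta : - (PI / 2) < th < PI / 2 -> 0 < r ->
  (cexp (- ray th r) * Cppow (ray th r) beta * cexp (RtoC r * wv th - beta * (ln r, th)))%C = RtoC 1.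
Proof. intros Hth Hr. rewrite Cppow_ray by auto. rewrite cexp_add, cexp_add.
 replace (- ray th r + beta * (ln r, th) + (RtoC r * wv th - beta * (ln r, th)))%C with (RtoC 0).
 apply cexp_0. unfold ray, wv. ring. Qed.

Theorem mainTheorem11 (a b beta : C) (theta r0 : R) (f0 f1 : C -> C) :
  - (PI / 2) < theta < PI / 2 ->
  0 < r0 ->
  ray_solution a b beta theta r0 f0 ->
  ray_solution a b beta theta r0 f1 ->
  filterlim (fun r : R => f0 (ray theta r)) (Rbar_locally p_infty) (locally (RtoC 0)) ->
  filterlim (fun r : R => f1 (ray theta r)) (Rbar_locally p_infty) (locally (RtoC 0)) ->
  exists C0 : C,
    (exists eps : R -> C,
        filterlim eps (Rbar_locally p_infty) (locally (RtoC 0)) /\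
        exists R1 : R, forall r : R, R1 < r ->
          (f1 (ray theta r) - f0 (ray theta r)
           = cexp (- ray theta r) * Cppow (ray theta r) beta * (C0 + eps r))%C) /\
    (C0 = RtoC 0 ->
      exists R2 : R, forall r : R, R2 < r -> f1 (ray theta r) = f0 (ray theta r)).
Proof.
 intros Hth Hr0 S0 S1 L0 L1.
 destruct (decay a b beta theta r0 f0 Hth Hr0 S0 L0) as [A0 [Ra0 [HA0 [HRa0 D0]]]].
 destruct (decay a b beta theta r0 f1 Hth Hr0 S1 L1) as [A1 [Ra1 [HA1 [HRa1 D1]]]].
 set (w := wv theta).
 set (u0 := fun r => f0 (ray theta r)). set (u1 := fun r => f1 (ray theta r)).
 set (g := fun r => (u1 r - u0 r)%C).
 set (phi := fun r => (a * (u1 r + u0 r) + b * (u1 r * u1 r + u1 r * u0 r + u0 r * u0 r))%C).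
 set (psi := fun r => (w * phi r)%C).
 set (Ex := fun r => cexp (RtoC r * w - beta * (ln r, theta))%C).
 set (q := fun r => (g r * Ex r)%C).
 set (xb := Rmax (Rmax Ra0 Ra1) (Rmax r0 1)).
 assert (Hxb : forall t, xb < t -> Ra0 < t /\ Ra1 < t /\ r0 < t /\ 1 < t).
 { intros t Ht. unfold xb in Ht. apply Rmax_Rlt in Ht. destruct Ht as [H1 H2].
   apply Rmax_Rlt in H1. apply Rmax_Rlt in H2. tauto. }
 set (A := Rmax A0 A1).
 set (K := Cmod a * (2 * A) + Cmod b * (3 * (A * A))).
 assert (HA : 0 <= A) by (unfold A; apply Rle_trans with A0; auto; apply Rmax_l).
 assert (HK : 0 <= K). { unfold K. pose proof (Cmod_ge_0 a). pose proof (Cmod_ge_0 b). 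
   assert (0 <= A * A) by nra. nra. }
 assert (Hw : w <> 0%C) by apply wv_neq0.
 destruct (lin_ode q psi xb K) as [C0 [B [x1 [HB [Hx1 [Hconv Hzero]]]]]].
 - unfold xb. apply Rlt_le_trans with 1. lra. eapply Rle_trans. 2: apply Rmax_r. apply Rmax_r.
 - auto.
 - intros t Ht. destruct (Hxb t Ht) as [H1 [H2 [H3 H4]]].
   assert (Ht0 : t <> 0) by lra.
   pose proof (sol_deriv a b beta theta r0 f0 t S0 H3) as Du0.
   pose proof (sol_deriv a b beta theta r0 f1 t S1 H3) as Du1.
   pose proof (CD_minus _ _ t _ _ Du1 Du0) as Dg.
   pose proof (CD_cexp (fun t => RtoC t * w - beta * (ln t, theta))%C t _
     (CD_minus _ _ t _ _ (CD_lin w t) (CD_mult _ _ t _ _ (CD_const beta t) (CD_lnpair theta t ltac:(lra))))) as DE.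
   pose proof (CD_mult _ _ t _ _ Dg DE) as Dq.
   eapply CD_eq. exact Dq.
   unfold q, g, Ex, psi, phi, u0, u1. fold w. rewrite RtoC_inv by auto.
   unfold ray. replace (cexp (RtoC theta * (0,1))) with w by reflexivity.
   assert (RtoC t <> 0%C). { intros H. apply (f_equal fst) in H. simpl in H. lra. }
   field. auto.
 - intros t Ht. destruct (Hxb t Ht) as [H1 [H2 [H3 H4]]].
   assert (Htt : 1 <= t * t) by nra.
   set (al := A / (t * t)).
   assert (Hal0 : 0 <= al). { unfold al. apply Rmult_le_pos; auto. apply Rlt_le, Rinv_0_lt_compat; lra. }
   assert (HalA : al <= A). { unfold al. apply Rmult_le_reg_r with (t * t). lra.
     unfold Rdiv. rewrite Rmult_assoc, Rinv_l by lra. nra. }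
   assert (Hm0 : Cmod (u0 t) <= al).
   { eapply Rle_trans. apply D0; auto. unfold al, Rdiv. apply Rmult_le_compat_r.
     apply Rlt_le, Rinv_0_lt_compat; lra. apply Rmax_l. }
   assert (Hm1 : Cmod (u1 t) <= al).
   { eapply Rle_trans. apply D1; auto. unfold al, Rdiv. apply Rmult_le_compat_r.
     apply Rlt_le, Rinv_0_lt_compat; lra. apply Rmax_r. }
   pose proof (Cmod_ge_0 (u0 t)). pose proof (Cmod_ge_0 (u1 t)).
   pose proof (Cmod_ge_0 a). pose proof (Cmod_ge_0 b).
   unfold psi. rewrite Cmod_mult. unfold w, wv. rewrite w_eq, Cmod_w, Rmult_1_l.
   unfold phi. eapply Rle_trans. apply Cmod_triangle. rewrite !Cmod_mult.
   eapply Rle_trans. apply Rplus_le_compat.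
   apply Rmult_le_compat_l. auto. apply Cmod_triangle.
   apply Rmult_le_compat_l. auto. eapply Rle_trans. apply Cmod_triangle.
   apply Rplus_le_compat_r. apply Cmod_triangle.
   rewrite !Cmod_mult.
   replace (K / (t * t)) with (Cmod a * (2 * al) + Cmod b * (3 * (A * al))) by (unfold K, al; field; lra).
   assert (Cmod (u1 t) * Cmod (u1 t) <= A * al) by nra.
   assert (Cmod (u1 t) * Cmod (u0 t) <= A * al) by nra.
   assert (Cmod (u0 t) * Cmod (u0 t) <= A * al) by nra.
   apply Rplus_le_compat; apply Rmult_le_compat_l; auto; lra.
 - exists C0. split.
   + exists (fun t => (q t - C0)%C). split.
     * apply filterlim_locally. intros eps. exists (Rmax x1 (B / eps)). intros t Ht.
       apply Rmax_Rlt in Ht. destruct Ht as [Ht1 Ht2].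
       assert (Hbt : B / t < eps).
       { assert (0 < t). { apply Rle_lt_trans with (B / eps). apply Rlt_le, Rdiv_lt_0_compat; auto. apply cond_pos. auto. }
         apply Rmult_lt_reg_r with t. auto. replace (B / t * t) with B by (field; lra).
         pose proof (cond_pos eps) as He.
         assert (HBe : B = (B / eps) * eps) by (field; lra). rewrite HBe at 1.
         rewrite (Rmult_comm eps t). apply Rmult_lt_compat_r. auto. exact Ht2. }
       destruct (Hconv t Ht1) as [Hc1 Hc2]. split.
       -- change (Rabs (Re (q t - C0)%C - 0) < eps). rewrite Rminus_0_r, re_minus. lra.
       -- change (Rabs (Im (q t - C0)%C - 0) < eps). rewrite Rminus_0_r, im_minus. lra.
     * exists x1. intros r Hr. assert (Hr' : 0 < r). { destruct (Hxb r ltac:(lra)). lra. }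
       replace (C0 + (q r - C0))%C with (q r) by ring.
       unfold q. fold (u1 r) (u0 r). fold (g r). 
       pose proof (P_Ex theta r beta Hth Hr') as HP. fold w in HP. fold (Ex r) in HP.
       transitivity (g r * (cexp (- ray theta r) * Cppow (ray theta r) beta * Ex r))%C.
       rewrite HP. ring. ring.
   + intros HC. exists x1. intros r Hr. assert (Hr' : 0 < r). { destruct (Hxb r ltac:(lra)). lra. }
     pose proof (Hzero HC r Hr) as Hq0.
     pose proof (P_Ex theta r beta Hth Hr') as HP. fold w in HP. fold (Ex r) in HP.
     assert (Hg : g r = RtoC 0).
     { transitivity (g r * (cexp (- ray theta r) * Cppow (ray theta r) beta * Ex r))%C.
       rewrite HP. ring. 
       replace (g r * (cexp (- ray theta r) * Cppow (ray theta r) beta * Ex r))%C with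
         (cexp (- ray theta r) * Cppow (ray theta r) beta * q r)%C by (unfold q; ring).
       rewrite Hq0. ring. }
     unfold g, u0, u1 in Hg. 
     replace (f1 (ray theta r)) with ((f1 (ray theta r) - f0 (ray theta r)) + f0 (ray theta r))%C by ring.
     rewrite Hg. ring.
Qed.
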